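(* Assume there exists $\Delta_{\min}^{\mathcal P}>0$ such that for every truth $p\in\mathcal P$, $a_p(X)$ is unique and $R_p(X,a_p(X))-\sup_{a\in S_X,\,a\neq a_p(X)}R_p(X,a)\ge\Delta_{\min}^{\mathcal P}$ holds $d_0$-a.s. Then for every $p,q\in\mathcal P$, \[ \Delta_{\min}^{\mathcal P}\,d_0\{a_q\neq a_p\}\le\mathcal G_p(R_q)\le\Delta_{\max}^{\mathcal P}\,d_0\{a_q\neq a_p\}. \]
   Context: $\mathcal X$ is a context space with distribution $d_0$; $\mathcal A$ is a separable metric action space; $\pi_0$ is a reference policy and $S_x:=\mathrm{supp}(\pi_0(\cdot\mid x))$. $\mathcal P$ is a compact class of truths, each $p\in\mathcal P$ inducing a $\pi_0$-centered measurable reward $R_p:\mathcal X\times\mathcal A\to\mathbb R$. For a reward $R$, $a_R(x)$ is a measurable selector in $\arg\max_{a\in S_x}R(x,a)$ (fixed measurable tie-breaking), and $a_p:=a_{R_p}$. The temperature-zero regret is $\mathcal G_p(R):=\mathbb E_{X\sim d_0}[R_p(X,a_p(X))-R_p(X,a_R(X))]$. Also $\Delta_{\max}^{\mathcal P}:=\sup_{p\in\mathcal P}\sup_{x\in\mathcal X}\sup_{a\in S_x}(R_p(x,a_p(x))-R_p(x,a))$. *)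

(* Defs.v *)
From HB Require Import structures.
From mathcomp Require Import all_boot all_order all_algebra.
From mathcomp Require Import all_classical all_reals all_analysis.
Set Implicit Arguments. Unset Strict Implicit. Unset Printing Implicit Defensive.
Import Order.TTheory GRing.Theory Num.Theory.
Local Open Scope classical_set_scope.
Local Open Scope ring_scope.
Local Open Scope ereal_scope.

Definition regret {dX : measure_display} {X : measurableType dX} {A : Type}
  {R : realType} (d0 : probability X R) (Rp : X -> A -> R) (ap aR : X -> A)
  : \bar R :=
  \int[d0]_x ((Rp x (ap x) - Rp x (aR x))%R)%:E.

Definition Delta_max {PT : Type} {X A : Type} {R : realType}
  (P : set PT) (S : X -> set A) (Rw : PT -> X -> A -> R) (asel : PT -> X -> A)
  : \bar R :=
  ereal_sup [set r : \bar R | exists p x a, [/\ P p, S x a &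
      r = ((Rw p x (asel p x) - Rw p x a)%R)%:E] ].

Definition gap_at {X A : Type} {R : realType} (S : X -> set A)
  (Rp : X -> A -> R) (ap : X -> A) (Dmin : R) (x : X) : Prop :=
  (forall a, S x a -> Rp x a = Rp x (ap x) -> a = ap x) /\
  (Dmin%:E <= (Rp x (ap x))%:E
              - ereal_sup [set (Rp x a)%:E | a in S x `\ ap x]).

Definition is_argmax_selector {X A : Type} {R : realType} (S : X -> set A)
  (Rp : X -> A -> R) (a : X -> A) : Prop :=
  forall x, S x (a x) /\ (forall b, S x b -> (Rp x b <= Rp x (a x))%R).

(* Main.v *)
Require Import Defs.
From HB Require Import structures.
From mathcomp Require Import all_boot all_order all_algebra.
From mathcomp Require Import all_classical all_reals all_analysis.
From mathcomp Require Import measurable_realfun lra.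
Import Order.TTheory GRing.Theory Num.Theory.
Local Open Scope classical_set_scope.
Local Open Scope ring_scope.
Local Open Scope ereal_scope.

Theorem lemma11 (R : realType)
  (dX : measure_display) (X : measurableType dX)
  (dA : measure_display) (A : measurableType dA)
  (hdiag : measurable [set aa : A * A | aa.1 = aa.2])
  (d0 : probability X R)
  (S : X -> set A)
  (PT : topologicalType) (P : set PT) (hPc : compact P)
  (Rw : PT -> X -> A -> R)
  (hRmeas : forall p, P p -> measurable_fun [set: X * A] (fun xa => Rw p xa.1 xa.2))
  (asel : PT -> X -> A)
  (hsel : forall p, P p -> is_argmax_selector S (Rw p) (asel p))
  (hselm : forall p, P p -> measurable_fun [set: X] (asel p))
  (Dmin : R) (hDmin : (0 < Dmin)%R)
  (hgap : forall p, P p -> {ae d0, forall x, gap_at S (Rw p) (asel p) Dmin x}) :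
  forall p q, P p -> P q ->
    Dmin%:E * d0 [set x | asel q x <> asel p x]
      <= regret d0 (Rw p) (asel p) (asel q) /\
    regret d0 (Rw p) (asel p) (asel q)
      <= Delta_max P S Rw asel * d0 [set x | asel q x <> asel p x].
Proof.
move=> p q Pp Pq.
set f := fun x => (Rw p x (asel p x) - Rw p x (asel q x))%R%:E.
set E := [set x | asel q x <> asel p x].
have mE : measurable E.
  have -> : E = (fun x => (asel q x, asel p x)) @^-1` (~` [set aa : A * A | aa.1 = aa.2]).
    by apply/seteqP; split => x /=.
  rewrite -[_ @^-1` _]setTI.
  apply: (measurable_fun_pair (hselm q Pq) (hselm p Pp)) => //.
  exact: measurableC.
have mRp : forall a : X -> A, measurable_fun setT a ->
    measurable_fun setT (fun x => Rw p x (a x)).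
  move=> a ma.
  apply: (measurableT_comp (f := fun xa : X * A => Rw p xa.1 xa.2)
    (g := fun x => (x, a x))); first exact: hRmeas.
  exact: measurable_fun_pair.
have mf : measurable_fun [set: X] (fun x => (Rw p x (asel p x) - Rw p x (asel q x))%R%:E).
  apply: (proj2 (measurable_EFinP _ _)); exact: measurable_funB (mRp _ (hselm p Pp)) (mRp _ (hselm q Pq)).
have f0 : forall x, 0 <= f x.
  move=> x; rewrite lee_fin subr_ge0.
  by have [_ h] := hsel p Pp x; apply: h; have [] := hsel q Pq x.
have -> : regret d0 (Rw p) (asel p) (asel q) = \int[d0]_x f x by [].
split.
  rewrite -integral_cst // integral_mkcond.
  apply: ae_ge0_le_integral => //.
  - by move=> x _; rewrite patchE; case: ifP => // _; rewrite lee_fin ltW.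
  - by apply/(measurable_restrictT _ mE); exact: measurable_cst.
  - apply: filterS (hgap p Pp) => x [_ hg] _.
    rewrite patchE; case: ifPn => [/set_mem xE|_]; last exact: f0.
    have hub : (Rw p x (asel q x))%:E <=
        ereal_sup [set (Rw p x a)%:E | a in S x `\ asel p x].
      apply: ereal_sup_ubound; exists (asel q x) => //; split => //.
      by have [] := hsel q Pq x.
    move: hg hub.
    case: (ereal_sup _) => [s| |] /=.
    + rewrite /f /= => h1 h2.
      rewrite -EFinD !lee_fin in h1 h2 *; lra.
    + by rewrite /= addeNy leeNy_eq.
    + by move=> _; rewrite leeNy_eq.
set Dm := Delta_max P S Rw asel.
have Dm0 : 0 <= Dm.
  apply: ereal_sup_ubound => /=.
  exists p, point, (asel p point); split => //; first by have [] := hsel p Pp point.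
  by rewrite subrr.
rewrite -integral_cst // integral_mkcond.
apply: ge0_le_integral => //.
- by apply/(measurable_restrictT _ mE); exact: measurable_cst.
- move=> x _; rewrite patchE; case: ifPn => [/set_mem xE|/negP xE].
    apply: ereal_sup_ubound; exists p, x, (asel q x); split => //.
    by have [] := hsel q Pq x.
  rewrite /f; have -> : asel q x = asel p x.
    by apply: contra_notP xE => h; apply/mem_set.
  by rewrite /f subrr.
Qed.
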